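(* Suppose the ST problem for $(D_{SC},F,B)$ has a positive answer. Then there is a solution to it, which necessarily consists of paths $\pi(v)$, one starting at each source $v$ of $D_{SC}$, such that for every $i\in\mathcal U$ and $j\in I_i$ we have $V(\pi(u_{i,j}))\subseteq V(C_i)$.
   Context: Snow Team problem (ST): given a digraph $D=(\mathcal V,\mathcal A)$ whose underlying graph is connected, and $F:\mathcal V\to\{0,1\}$, $B:\mathcal V\to\mathbb N$, with $\mathbf k_B=\sum_vB(v)$: do there exist $\mathbf k_B$ directed walks, exactly $B(v)$ of which start at each $v$, such that, letting $H$ be the subgraph consisting of the vertices and arcs of these walks, all vertices of $F^{-1}(1)$ lie in one connected component of the underlying undirected graph of $H$? Such walks form a solution. Construction: $\mathcal U=\{1,\dots,n\}$, $\mathcal S=\{S_1,\dots,S_m\}$ with $S_t\subseteq\mathcal U$, $\bigcup_tS_t=\mathcal U$, and $1\le k\le m$. Write $S_t=\{x_1<\dots<x_{\ell(t)}\}$ and $I_i=\{j: i\in S_j\}$. The digraph $D_{SC}$ has vertices $u_i$ ($i\in\mathcal U$); $u_{i,j},u'_{i,j},v_{i,j},v'_{i,j}$ ($i\in\mathcal U$, $j\in I_i$); and $z,z_1,\dots,z_k$. Its arcs are those of the vertical paths $P_{i,j}=(u_{i,j},u_i,u'_{i,j},v_{i,j},v'_{i,j})$ ($i\in\mathcal U,j\in I_i$), of the horizontal paths $P^h_t=(z,v_{x_1,t},v_{x_2,t},\dots,v_{x_{\ell(t)},t})$ ($t\in\{1,\dots,m\}$, with $x_1<\dots<x_{\ell(t)}$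 the elements of $S_t$), and the arcs $(z_l,z)$ for $l=1,\dots,k$. The $i$-th element component $C_i$ is the subgraph induced by $\bigcup_{j\in I_i}V(P_{i,j})$. Set $F(v)=1$ for all vertices $v$, and $B(v)=1$ if $v$ is a source of $D_{SC}$ (i.e. $v\in\{u_{i,j}\}\cup\{z_1,\dots,z_k\}$) and $B(v)=0$ otherwise. Since $D_{SC}$ is acyclic, every solution consists of one directed path $\pi(v)$ starting at each source $v$. *)

(* Defs.v *)
From mathcomp Require Import all_boot.
Set Implicit Arguments. Unset Strict Implicit. Unset Printing Implicit Defensive.

Section ST.
Variable V : finType.
Variable isV : pred V.
Variable A : rel V.

Definition walk (w : seq V) : bool :=
  if w is x :: p then all isV w && path A x p else false.

Definition inH (W : seq (seq V)) (x : V) : bool := has (fun w => x \in w) W.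
Definition arcH (W : seq (seq V)) (x y : V) : bool :=
  has (fun w => infix [:: x; y] w) W.
Definition uarcH (W : seq (seq V)) : rel V := fun x y => arcH W x y || arcH W y x.

(* W is a solution of ST for (D, F, B): exactly B v walks start at each v, and
   all vertices of F^{-1}(1) lie in one connected component of H *)
Definition ST_solution (F : V -> bool) (B : V -> nat) (W : seq (seq V)) : Prop :=
  [/\ all walk W,
      (forall v, isV v -> count (fun w => ohead w == Some v) W = B v) &
      (forall x y, isV x -> isV y -> F x -> F y ->
         [/\ inH W x, inH W y & connect (uarcH W) x y])].
End ST.

(* Universe U = 'I_n (elements 0..n-1 stand for 1..n), sets S : 'I_m -> {set 'I_n}.
   Vertices:  u_i                         = vU i
              u_{i,j}, u'_{i,j}, v_{i,j}, v'_{i,j} = vP c i j with c = 0,1,2,3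
              z = vZ,  z_l = vZl l (l : 'I_k). *)
Definition vtx (n m k : nat) :=
  ('I_n + ('I_4 * 'I_n * 'I_m) + (unit + 'I_k))%type.

Definition vU {n m k} (i : 'I_n) : vtx n m k := inl (inl i).
Definition vP {n m k} (c : 'I_4) (i : 'I_n) (j : 'I_m) : vtx n m k := inl (inr (c, i, j)).
Definition vZ {n m k} : vtx n m k := inr (inl tt).
Definition vZl {n m k} (l : 'I_k) : vtx n m k := inr (inr l).

Definition c0 : 'I_4 := @Ordinal 4 0 isT.

Section DSC.
Variables n m k : nat.
Variable S : 'I_m -> {set 'I_n}.

(* vertex set: vP c i j exists only when j \in I_i, i.e. i \in S j *)
Definition isV_SC (v : vtx n m k) : bool :=
  match v with
  | inl (inr (_, i, j)) => i \in S j
  | _ => true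
  end.

Definition min_in (A : {set 'I_n}) (x : 'I_n) : bool :=
  (x \in A) && [forall w in A, x <= w].
Definition succ_in (A : {set 'I_n}) (x y : 'I_n) : bool :=
  [&& x \in A, y \in A, x < y & [forall w in A, ~~ ((x < w) && (w < y))]].

Definition arc_SC (a b : vtx n m k) : bool :=
  match a, b with
  | inl (inr (c, i, j)), inl (inl i') => [&& val c == 0, i == i' & i \in S j]
  | inl (inl i'), inl (inr (c, i, j)) => [&& val c == 1, i == i' & i \in S j]
  | inl (inr (c, i, j)), inl (inr (c', i', j')) =>
      (i \in S j) && (
        ([|| (val c == 1) && (val c' == 2) | (val c == 2) && (val c' == 3)]
           && (i == i') && (j == j'))
        (* horizontal path arcs v_{x_a,t} -> v_{x_{a+1},t} *)
        || [&& val c == 2, val c' == 2, j == j' & succ_in (S j) i i'])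
  (* horizontal path first arc z -> v_{x_1,t} *)
  | inr (inl _), inl (inr (c, i, j)) => (val c == 2) && min_in (S j) i
  | inr (inr _), inr (inl _) => true
  | _, _ => false
  end.

Definition F_SC (v : vtx n m k) : bool := true.

Definition B_SC (v : vtx n m k) : nat :=
  match v with
  | inl (inr (c, _, _)) => if val c == 0 then 1 else 0
  | inr (inr _) => 1
  | _ => 0
  end.

(* vertex set of the i-th element component C_i *)
Definition inC (i : 'I_n) (v : vtx n m k) : bool :=
  match v with
  | inl (inl i') => i' == i
  | inl (inr (_, i', j)) => (i' == i) && (i \in S j)
  | _ => false
  end.
End DSC.

(* Main.v *)
Require Import Defs.
From mathcomp Require Import all_boot.
Set Implicit Arguments. Unset Strict Implicit. Unset Printing Implicit Defensive.

Definition c1 : 'I_4 := @Ordinal 4 1 isT.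
Definition c2 : 'I_4 := @Ordinal 4 2 isT.
Definition c3 : 'I_4 := @Ordinal 4 3 isT.

Lemma sorted_catR (T : eqType) (e : rel T) s s' : sorted e (s ++ s') -> sorted e s'.
Proof.
case: s => //= x s; rewrite cat_path => /andP[_ /path_sorted]; by [].
Qed.

Lemma infix_arc (T : eqType) (e : rel T) w a b :
  sorted e w -> infix [:: a; b] w -> e a b.
Proof.
move=> Hs /infixP [s [s' E]]; move: Hs; rewrite E => /sorted_catR.
by rewrite /= => /andP[].
Qed.

Lemma count1_uniq (T : eqType) (p : pred T) s x y :
  count p s = 1 -> x \in s -> y \in s -> p x -> p y -> x = y.
Proof.
elim: s => //= h s IH; case: (boolP (p h)) => ph /=.
- move=> [] /eqP; rewrite -leqn0 leqNgt -has_count => /hasPn Hn.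
  rewrite !inE => /orP[/eqP->|/Hn/negbTE->]// /orP[/eqP->|/Hn/negbTE->]//.
- rewrite add0n => Hc; rewrite !inE => /orP[/eqP->|hx]; first by rewrite (negbTE ph).
  move=> /orP[/eqP->|hy]; first by move=> _; rewrite (negbTE ph).
  exact: IH.
Qed.

Lemma count_le_sum (T : eqType) (I : finType) (P : pred T) (Q : I -> pred T) s :
  (forall x, x \in s -> P x -> exists j, Q j x) ->
  count P s <= \sum_j count (Q j) s.
Proof.
elim: s => [|h s IH] H; first by rewrite big1.
rewrite /= big_split /=; apply: leq_add; last first.
  by apply: IH => x xs; apply: H; rewrite inE xs orbT.
case: (boolP (P h)) => // Ph; have [j Qj] := H h (mem_head _ _) Ph.
by rewrite (bigD1 j) //= Qj.
Qed.

Lemma sum_count_le (T : eqType) (I : finType) (P : pred T) (Q : I -> pred T) s :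
  (forall x, x \in s -> \sum_j (Q j x : nat) <= P x) ->
  \sum_j count (Q j) s <= count P s.
Proof.
elim: s => [|h s IH] H; first by rewrite big1.
rewrite /= big_split /=; apply: leq_add; first by apply: H; rewrite mem_head.
by apply: IH => x xs; apply: H; rewrite inE xs orbT.
Qed.

Lemma sum_le1 (I : finType) (Q : I -> bool) (b : bool) :
  (forall j, Q j -> b) -> (forall j j', Q j -> Q j' -> j = j') ->
  \sum_j (Q j : nat) <= b.
Proof.
move=> H1 H2; case: (pickP Q) => [j Qj|Hn].
- rewrite (bigD1 j) //= Qj big1 ?addn0 ?(H1 j) // => j' nj.
  case: (boolP (Q j')) => //= /(H2 _ _ Qj) E; by rewrite E eqxx in nj.
- by rewrite big1 // => j _; rewrite Hn.
Qed.

Lemma count_sub_in (T : eqType) (P Q : pred T) s :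
  (forall y, y \in s -> Q y -> P y) -> count Q s <= count P s.
Proof.
elim: s => //= h s IH H; apply: leq_add.
  by case: (boolP (Q h)) => // /H->; rewrite // mem_head.
by apply: IH => y ys; apply: H; rewrite inE ys orbT.
Qed.

Lemma count_lt (T : eqType) (P Q : pred T) s x :
  (forall y, y \in s -> Q y -> P y) -> x \in s -> P x -> ~~ Q x ->
  count Q s < count P s.
Proof.
elim: s => //= h s IH H; rewrite inE => /orP[/eqP->|xs] Px nQx.
- rewrite Px (negbTE nQx) add0n add1n ltnS.
  by apply: count_sub_in => y ys; apply: H; rewrite inE ys orbT.
- have H' : forall y, y \in s -> Q y -> P y by move=> y ys; apply: H; rewrite inE ys orbT.
  rewrite -addnS; apply: leq_add; last exact: IH.
  by case: (boolP (Q h)) => // /H->; rewrite // mem_head.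
Qed.

Section Main.
Variables (n m k : nat) (S : 'I_m -> {set 'I_n}).
Local Notation V := (vtx n m k).
Local Notation isV := (@isV_SC n m k S).
Local Notation A := (arc_SC S).

Definition pot (v : V) : nat := match v with
 | inl (inl _) => 1
 | inl (inr (c, i, _)) => if val c == 0 then 0 else if val c == 1 then 2 else 3 + i
 | inr (inl _) => 1 | inr (inr _) => 0 end.

Lemma pot_arc a b : A a b -> pot a <= pot b.
Proof.
case: a => [[i|[[c i] j]]|[[]|l]]; case: b => [[i'|[[c' i'] j']]|[[]|l']] //=.
- by case/and3P => /eqP->.
- by case/and3P => /eqP->.
- case/andP=> _ /orP[/andP[/andP[/orP[/andP[/eqP-> /eqP->]|/andP[/eqP-> /eqP->]] /eqP->] _]|] //.
  case/and4P=> /eqP-> /eqP-> _ /and4P[_ _ lt _] /=.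
  by rewrite leq_add2l ltnW.
- by case/andP=> /eqP->.
Qed.

Lemma sorted_rcons2 (T : eqType) (e : rel T) q z y : sorted e (rcons (rcons q z) y) -> e z y.
Proof.
case: q => [|a q] /=; first by rewrite andbT.
by rewrite !rcons_path last_rcons => /andP[].
Qed.

Lemma pot_path x p : path A x p -> forall y, y \in p -> pot x <= pot y.
Proof.
elim: p x => //= h p IH x /andP[Ah Hp] y; rewrite inE => /orP[/eqP->|yp].
  exact: pot_arc.
exact: leq_trans (pot_arc Ah) (IH _ Hp _ yp).
Qed.

Lemma pot_last x p : path A x p -> forall y, y \in x :: p -> pot y <= pot (last x p).
Proof.
elim: p x => [|h p IH] x /=; first by move=> _ y; rewrite inE => /eqP->.
case/andP=> Ah Hp y; rewrite inE => /orP[/eqP->|yp].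
  exact: leq_trans (pot_arc Ah) (IH _ Hp _ (mem_head _ _)).
exact: IH.
Qed.

Lemma walkE (w : seq V) : walk isV A w -> exists x p, w = x :: p /\ path A x p /\ all isV w.
Proof. by case: w => //= x p /andP[H1 H2]; exists x, p. Qed.

Variable W : seq (seq V).
Hypothesis HW : ST_solution isV A (@F_SC n m k) (@B_SC n m k) W.

Lemma W_walk w : w \in W -> walk isV A w.
Proof. by case: HW => /allP H _ _; apply: H. Qed.

Lemma W_sorted w : w \in W -> sorted A w.
Proof. by move/W_walk; case: w => //= x p /andP[]. Qed.

Lemma W_isV w y : w \in W -> y \in w -> isV y.
Proof. by move/W_walk; case: w => // x p; rewrite /walk => /andP[/allP H _] /H. Qed.

Lemma W_count v : isV v -> count (fun w => ohead w == Some v) W = B_SC v.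
Proof. by case: HW => _ H _; apply: H. Qed.

Lemma W_inH v : isV v -> exists2 w, w \in W & v \in w.
Proof.
case: HW => _ _ H Hv; have [] := H _ _ Hv Hv erefl erefl.
by move=> /hasP [w] ? ? _ _; exists w.
Qed.

Lemma W_conn x y : isV x -> isV y -> connect (uarcH W) x y.
Proof. by case: HW => _ _ H Hx Hy; case: (H _ _ Hx Hy erefl erefl). Qed.

Lemma head_source w x p : w \in W -> w = x :: p -> 0 < B_SC x.
Proof.
move=> Hw E; have Hx : isV x by apply: (W_isV Hw); rewrite E mem_head.
rewrite -(W_count Hx) -has_count; apply/hasP; exists w => //; by rewrite E.
Qed.

Lemma pred_ex w y : w \in W -> y \in w -> B_SC y = 0 -> exists2 z, z \in w & A z y.
Proof.
move=> Hw Hy HB; have Hs := W_sorted Hw.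
case/splitPr: Hy Hw Hs => p1 p2 Hw Hs.
case/lastP: p1 Hw Hs => [|q z] Hw Hs.
  by have := head_source Hw (erefl _); rewrite HB.
exists z; first by rewrite mem_cat mem_rcons mem_head.
by move: Hs; rewrite sorted_cat_cons => /andP[/sorted_rcons2].
Qed.

Lemma head_of w y : w \in W -> y \in w -> (forall z, ~~ A z y) -> ohead w = Some y.
Proof.
move=> Hw Hy Hn; have Hs := W_sorted Hw.
case/splitPr: Hy Hw Hs => p1 p2 Hw Hs.
case/lastP: p1 Hw Hs => [|q z] //= Hw.
rewrite sorted_cat_cons => /andP[/sorted_rcons2 Hz _].
by have := Hn z; rewrite Hz.
Qed.

Lemma last_of w y : w \in W -> y \in w -> (forall z, ~~ A y z) -> last y w = y.
Proof.
move=> Hw Hy Hn; have Hs := W_sorted Hw.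
case/splitPr: Hy Hw Hs => p1 p2 Hw Hs.
case: p2 Hw Hs => [|z q] Hw; first by rewrite last_cat.
rewrite sorted_cat_cons /= => /andP[_ /andP[Hz _]].
by have := Hn z; rewrite Hz.
Qed.


Lemma sorted_rcons_l (T : eqType) (e : rel T) s x : sorted e (rcons s x) -> sorted e s.
Proof. by case: s => //= a s; rewrite rcons_path => /andP[]. Qed.

Variable t0 : 'I_m.

Definition zrow (l : 'I_k) t :=
  has (fun w => [exists x : 'I_n, take 3 w == [:: vZl l; vZ; vP c2 x t]]) W.
Definition f l := odflt t0 [pick t | zrow l t].

Lemma zarc w b : w \in W -> infix [:: vZ; b] w ->
  exists l x t, [/\ b = vP c2 x t, f l = t, min_in (S t) x & ohead w = Some (vZl l)].
Proof.
move=> Hw /infixP [s [s' E]]; subst w; have Hs := W_sorted Hw.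
case/lastP: s Hs Hw => [|q z] Hs Hw.
  by have := head_source Hw (erefl _).
move: Hs; rewrite sorted_cat_cons => /andP[Hq /= /andP[Hb _]].
have Hz := sorted_rcons2 Hq.
case: z Hz Hq Hw => [[i|[[c i] j]]|[[]|l]] //= _ Hq Hw.
case/lastP: q Hq Hw => [|q z'] Hq Hw; last first.
  by move: Hq => /sorted_rcons_l /sorted_rcons2; clear Hw; case: z' => [[?|[[? ?] ?]]|[[]|?]].
case: b Hb Hw => [[i|[[c i] j]]|[[]|l']] //= /andP[Hc Hmin] Hw.
have Ec : c = c2 by apply: ord_inj; apply/eqP.
subst c; exists l, i, j; split => //.
rewrite /f; case: pickP => [t' Ht'|Hn]; last first.
  suff : zrow l j by rewrite Hn.
  apply/hasP; exists (vZl l :: vZ :: vP c2 i j :: s'); first exact: Hw.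
  by apply/existsP; exists i; rewrite /= take0.
move: Ht'; rewrite /zrow => /hasP [w' Hw' /existsP [x' /eqP Ht]] /=.
have Eh : ohead w' = Some (vZl l).
  by case: w' Hw' Ht => [|a [|b [|c r]]] //= _ [->].
have Ew : w' = (vZl l :: vZ :: vP c2 i j :: s').
  apply: (@count1_uniq _ (fun w => ohead w == Some (vZl l)) W) => //=.
  - by rewrite W_count.
  - by rewrite Eh.
move: Ht; rewrite Ew /=; by case.
Qed.


Lemma pot2 y : pot y = 2 -> exists i j, y = vP c1 i j.
Proof.
case: y => [[?|[[c i] j]]|[[]|?]] //=; case: c => [[|[|c]] Hc] //= E.
  by exists i, j; congr vP; apply: ord_inj.
Qed.

Lemma after_up p1 y p2 z : sorted A (p1 ++ y :: p2) -> pot y = 2 -> z \in p2 -> 3 <= pot z.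
Proof.
rewrite sorted_cat_cons => /andP[_]; case: p2 => //= h r /andP[Ah Hr] Hy.
have Hh : 3 <= pot h.
  clear -Ah Hy; have [i [j Ey]] := pot2 Hy; subst y; move: Ah.
  case: h => [[?|[[c' i'] j']]|[[]|?]] //=.
  by rewrite !orbF => /andP[_ /andP[/andP[/eqP-> _] _]].
rewrite inE => /orP[/eqP->|zr] //; exact: leq_trans Hh (pot_path Hr zr).
Qed.

Lemma uone w y1 y2 : w \in W -> y1 \in w -> y2 \in w -> pot y1 = 2 -> pot y2 = 2 -> y1 = y2.
Proof.
move=> Hw Hy1; have Hs := W_sorted Hw.
case/splitPr: Hy1 Hw Hs => p1 p2 Hw Hs Hy2 P1 P2.
move: Hy2; rewrite mem_cat inE => /or3P[Hy2|/eqP//|Hy2].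
- case/splitPr: Hy2 Hw Hs => q1 q2 Hw Hs.
  move: Hs; rewrite -catA cat_cons => Hs.
  have Hm : y1 \in q2 ++ y1 :: p2 by rewrite mem_cat mem_head orbT.
  by have := after_up Hs P2 Hm; rewrite P1.
- by have := after_up Hs P1 Hy2; rewrite P2.
Qed.

Lemma upred w x j : w \in W -> vP c1 x j \in w -> vU x \in w.
Proof.
move=> Hw Hy; have [z Hz Az] := pred_ex Hw Hy erefl.
case: z Hz Az => [[i|[[c i] j']]|[[]|l]] //= Hz; rewrite ?andbF ?orbF ?andFb //.
by case/andP=> /eqP E _; rewrite E.
Qed.

Lemma uhead w x : w \in W -> vU x \in w -> exists2 j, x \in S j & ohead w = Some (vP c0 x j).
Proof.
move=> Hw Hy; have [z Hz Az] := pred_ex Hw Hy erefl.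
case: z Hz Az => [[i|[[c i] j]]|[[]|l]] //= Hz /and3P[Hc /eqP Ei Hi]; subst i.
have Ec : c = c0 by apply: ord_inj; apply/eqP.
subst c; exists j => //; apply: head_of Hw Hz _ => y.
by case: y => [[?|[[? ?] ?]]|[[]|?]] //=; rewrite ?andbF.
Qed.

Lemma sum_pt (I : finType) (a b : I -> nat) j0 :
  (forall j, b j <= a j) -> \sum_j a j <= \sum_j b j -> a j0 <= b j0.
Proof.
move=> Hba; rewrite (bigD1 j0) //= [X in _ <= X](bigD1 j0) //= => H.
have H2 : \sum_(j | j != j0) b j <= \sum_(j | j != j0) a j by apply: leq_sum.
by rewrite -(leq_add2r (\sum_(j | j != j0) a j)); apply: leq_trans H _; rewrite leq_add2l.
Qed.

Lemma ucount x j : x \in S j -> count (fun w => vP c1 x j \in w) W <= 1.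
Proof.
move=> Hxj.
pose Q j (w : seq V) := (x \in S j) && (vP c1 x j \in w).
pose R j (w : seq V) := (x \in S j) && (ohead w == Some (vP c0 x j)).
have H1 : \sum_j count (Q j) W <= count (fun w => vU x \in w) W.
  apply: sum_count_le => w Hw; apply: sum_le1.
  - by move=> j' /andP[_]; apply: upred.
  - move=> j1 j2 /andP[_ H1] /andP[_ H2]; by case: (uone Hw H1 H2 erefl erefl).
have H2 : count (fun w => vU x \in w) W <= \sum_j count (R j) W.
  apply: count_le_sum => w Hw /(uhead Hw) [j' Hj' Hh]; exists j'.
  by rewrite /R Hj' Hh eqxx.
have H3 : forall j, count (R j) W = (x \in S j).
  move=> j'; rewrite /R; case: (boolP (x \in S j')) => Hj /=.
    by rewrite W_count.
  by rewrite count_pred0.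
have H4 : forall j, (x \in S j : nat) <= count (Q j) W.
  move=> j'; rewrite /Q; case: (boolP (x \in S j')) => Hj //=.
  have [w Hw Hv] := @W_inH (vP c1 x j') Hj.
  by rewrite -has_count; apply/hasP; exists w.
have := @sum_pt _ (fun j => count (Q j) W) (fun j => (x \in S j : nat)) j H4.
rewrite /Q Hxj /=; apply; apply: leq_trans H1 (leq_trans H2 _).
by rewrite (eq_bigr _ (fun j _ => H3 j)).
Qed.


Lemma pred_ex2 w y : w \in W -> y \in w -> B_SC y = 0 ->
  exists z, [/\ z \in w, A z y & infix [:: z; y] w].
Proof.
move=> Hw Hy HB; have Hs := W_sorted Hw.
case/splitPr: Hy Hw Hs => p1 p2 Hw Hs.
case/lastP: p1 Hw Hs => [|q z] Hw Hs.
  by have := head_source Hw (erefl _); rewrite HB.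
exists z; split; first by rewrite mem_cat mem_rcons mem_head.
  by move: Hs; rewrite sorted_cat_cons => /andP[/sorted_rcons2].
by rewrite cat_rcons; apply/infixP; exists q, p2.
Qed.

Lemma infix_mem1 (T : eqType) (a b : T) w : infix [:: a; b] w -> a \in w.
Proof. by move/infixW/mem_subseq; apply; rewrite mem_head. Qed.

Lemma infix_mem2 (T : eqType) (a b : T) w : infix [:: a; b] w -> b \in w.
Proof. by move/infixW/mem_subseq; apply; rewrite !inE eqxx orbT. Qed.

Definition active t := [exists l, f l == t].

Lemma bwd t : ~~ active t -> forall N (x : 'I_n), x < N -> forall w, w \in W ->
  vP c2 x t \in w -> exists c : 'I_n, [/\ c <= x, c \in S t & vP c1 c t \in w].
Proof.
move=> Hna; elim=> // N IH x HxN w Hw Hy.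
have [z [Hz Az Iz]] := pred_ex2 Hw Hy erefl.
case: z Hz Az Iz => [[i|[[c i] j]]|[[]|l]] //= Hz.
- move=> /andP[Hi /orP[/andP[/andP[/orP[/andP[Hc _]|/andP[_ //]] /eqP Ei] /eqP Ej]|/and3P[Hc /eqP Ej Hsucc]]] _.
  + have Ec : c = c1 by apply: ord_inj; apply/eqP.
    by subst; exists x; split.
  + subst j; move: (Hsucc) => /and4P[_ _ ltix _].
    have [c' [H1 H2 H3]] : exists c : 'I_n, [/\ c <= i, c \in S t & vP c1 c t \in w].
      apply: (IH i) => //; first exact: leq_trans ltix HxN.
      have Ec : c = c2 by apply: ord_inj; apply/eqP.
      by rewrite -Ec.
    by exists c'; split => //; apply: leq_trans H1 (ltnW ltix).
- move=> _ Iz; have [l [x' [t' [E Hf _ _]]]] := zarc Hw Iz.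
  case: E => _ Et; subst t'.
  by move: Hna; rewrite /active; case/existsP; exists l; rewrite Et.
Qed.


Lemma W_cons w : w \in W -> exists h p, w = h :: p /\ path A h p.
Proof. by move/W_walk; case: w => // h p /andP[_ Hp]; exists h, p. Qed.

Lemma bwd' t x w : ~~ active t -> w \in W -> vP c2 x t \in w ->
  exists c : 'I_n, [/\ c <= x, c \in S t & vP c1 c t \in w].
Proof. by move=> Hna Hw Hy; apply: (bwd Hna (ltnSn x)). Qed.

Lemma no_horiz t w a b : ~~ active t -> w \in W ->
  infix [:: vP c2 a t; vP c2 b t] w -> succ_in (S t) a b -> False.
Proof.
move=> Hna Hw0 Hinf Hsucc; rename w into w0; move: (Hsucc) => /and4P[Hat Hbt ltab _].
pose P (w : seq V) := [exists c : 'I_n, [&& c \in S t, c <= a & vP c1 c t \in w]].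
pose Q (w : seq V) := [exists x : 'I_n, [&& x \in S t, x <= a & last vZ w == vP c3 x t]].
pose L := \sum_(x : 'I_n) ((x \in S t) && (x <= a) : nat).
have HP : count P W <= L.
  have H1 : count P W <= \sum_(c : 'I_n) count (fun w => [&& c \in S t, c <= a & vP c1 c t \in w]) W.
    by apply: count_le_sum => w _ /existsP[c Hc]; exists c.
  apply: leq_trans H1 _.
  apply: leq_sum => c _; case: (boolP (c \in S t)) => Hc /=; last by rewrite count_pred0.
  case: (boolP (c <= a)) => Hca /=; last by rewrite count_pred0.
  exact: ucount.
have HQ : L <= count Q W.
  have H1 : \sum_(x : 'I_n) count (fun w => [&& x \in S t, x <= a & last vZ w == vP c3 x t]) W <= count Q W.
    apply: sum_count_le.
    move=> w _; apply: sum_le1.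
      by move=> x /and3P[H1 H2 H3]; apply/existsP; exists x; rewrite H1 H2 H3.
    by move=> x x' /and3P[_ _ /eqP->] /and3P[_ _ /eqP []].
  apply: leq_trans H1.
    apply: leq_sum => x _; case: (boolP (x \in S t)) => Hx //=.
    case: (boolP (x <= a)) => Hxa //=.
    have [w Hw Hv] := @W_inH (vP c3 x t) Hx.
    rewrite -has_count; apply/hasP; exists w => //.
    have [h [p [Ew _]]] := W_cons Hw; subst w.
    have := last_of Hw Hv; rewrite /= => ->; last first.
      by move=> z; case: z => [[?|[[? ?] ?]]|[[]|?]] //=; rewrite ?andbF.
    by rewrite eqxx.
have HQP : count Q W < count P W.
  apply: (@count_lt _ P Q W w0) => //.
  - move=> w' Hw' /existsP[x /and3P[Hx Hxa /eqP El]].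
    have [h [p [Ew _]]] := W_cons Hw'.
    have Hv : vP c3 x t \in w' by rewrite -El Ew /=; apply: mem_last.
    have [z Hz Az] := pred_ex Hw' Hv erefl.
    case: z Hz Az => [[?|[[c i] j]]|[[]|?]] //= Hz; rewrite ?andbF ?orbF //.
    case/and3P=> _ /andP[/orP[//|/andP[Hc _]] /eqP Ei] /eqP Ej; subst i j.
    have Ec : c = c2 by apply: ord_inj; apply/eqP.
    subst c; have [c [H1 H2 H3]] := bwd' Hna Hw' Hz.
    by apply/existsP; exists c; rewrite H2 H3 (leq_trans H1 Hxa).
  - have [c [H1 H2 H3]] := bwd' Hna Hw0 (infix_mem1 Hinf).
    by apply/existsP; exists c; rewrite H1 H2 H3.
  - apply/existsP => [[x /and3P[_ Hxa /eqP El]]].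
    have [h [p [Ew Hp]]] := W_cons Hw0; subst w0.
    have El' : last h p = vP c3 x t by [].
    have := pot_last Hp (infix_mem2 Hinf); rewrite El' /=.
    by rewrite leq_add2l leqNgt (leq_ltn_trans Hxa ltab).
by have := leq_ltn_trans HQ (leq_trans HQP HP); rewrite ltnn.
Qed.


Definition covered (x : 'I_n) := [exists l, x \in S (f l)].
Definition Good (v : V) : bool := match v with
  | inl (inl x) => covered x | inl (inr (_, x, _)) => covered x | inr _ => true end.

Lemma good_arc w a b : w \in W -> infix [:: a; b] w -> Good a = Good b.
Proof.
move=> Hw Hinf; have Ab := infix_arc (W_sorted Hw) Hinf.
move: Ab Hinf; case: a => [[i|[[c i] j]]|[[]|l]]; case: b => [[i'|[[c' i'] j']]|[[]|l']] //=.
- by case/and3P=> _ /eqP-> _.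
- by case/and3P=> _ /eqP-> _.
- case/andP=> Hij /orP[/andP[/andP[_ /eqP->] _]//|/and4P[Hc Hc' /eqP Ej Hsucc]] Hinf.
  subst j'; case: (boolP (active j)) => Ha.
    case/existsP: Ha => l /eqP Hl; move: (Hsucc) => /and4P[_ Hi' _ _].
    by rewrite /covered; apply/idP/idP => _; apply/existsP; exists l; rewrite Hl.
  have Ec : c = c2 by apply: ord_inj; apply/eqP.
  have Ec' : c' = c2 by apply: ord_inj; apply/eqP.
  subst c c'; case: (no_horiz Ha Hw Hinf Hsucc).
- move=> _ Hinf; have [l [x [t [E Hf Hmin _]]]] := zarc Hw Hinf.
  case: E => _ Ei Ej; subst i' j'.
  by move: Hmin => /andP[Hx _]; apply/esym/existsP; exists l; rewrite Hf.
Qed.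

Lemma good_path a p : path (uarcH W) a p -> Good (last a p) = Good a.
Proof.
elim: p a => //= b p IH a /andP[Hab Hp]; rewrite IH //.
case/orP: Hab => /hasP [w Hw Hinf].
  by rewrite (good_arc Hw Hinf).
by rewrite (good_arc Hw Hinf).
Qed.

Lemma cover_all x : covered x.
Proof.
have := @W_conn vZ (vU x) isT isT; case/connectP => p Hp Hl.
by have := good_path Hp; rewrite -Hl.
Qed.

End Main.

Lemma path_fil (T : eqType) (e : rel T) (P : pred nat) (g : nat -> T) :
  (forall x y, P x -> P y -> x < y -> (forall w, x < w < y -> ~~ P w) -> e (g x) (g y)) ->
  forall len mm h,
  (forall y, P y -> mm <= y -> (forall w, mm <= w < y -> ~~ P w) -> e h (g y)) ->
  path e h (map g (filter P (iota mm len))).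
Proof.
move=> H2; elim=> [|len IH] mm h H1 //=.
case: (boolP (P mm)) => Pm /=.
- rewrite (H1 mm Pm (leqnn _)); last by move=> w /andP[a b]; move: (leq_trans b a); rewrite ltnn.
  apply: IH => y Py Hy Hw; apply: H2 => // w /andP[a b]; by apply: Hw; rewrite a b.
- apply: IH => y Py Hy Hw; apply: H1 => //; first exact: ltnW.
  move=> w /andP[a b]; move: a; rewrite leq_eqVlt => /orP[/eqP<- //|a].
  by apply: Hw; rewrite a b.
Qed.

Lemma conn_walk (T : finType) (W : seq (seq T)) w : w \in W ->
  forall q h, infix (h :: q) w -> forall y, y \in h :: q -> connect (uarcH W) h y.
Proof.
move=> Hw; elim=> [|b q IH] h Hinf y; first by rewrite inE => /eqP->; apply: connect0.
rewrite inE => /orP[/eqP->|yq]; first exact: connect0.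
have H1 : infix [:: h; b] w.
  by apply: infix_trans Hinf; apply: prefixW; rewrite /= !eqxx prefix0s.
have H2 : infix (b :: q) w by apply: infix_trans Hinf; apply: infix_cons.
apply: connect_trans (IH _ H2 _ yq); apply: connect1.
by rewrite /uarcH /arcH; apply/orP; left; apply/hasP; exists w.
Qed.

Section Constr.
Variables (n m k : nat) (S : 'I_m -> {set 'I_n}).
Local Notation V := (vtx n m k).
Local Notation isV := (@isV_SC n m k S).
Local Notation A := (arc_SC S).
Variable g : 'I_k -> 'I_m.
Hypothesis Hg : forall x, exists l, x \in S (g l).
Hypothesis Hk1 : 0 < k.

Definition vert (p : 'I_n * 'I_m) : seq V :=
  [:: vP c0 p.1 p.2; vU p.1; vP c1 p.1 p.2; vP c2 p.1 p.2; vP c3 p.1 p.2].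
Definition PR := [pred p : 'I_n * 'I_m | p.1 \in S p.2].
Definition Prow t (i : nat) : bool := oapp (fun x : 'I_n => x \in S t) false (insub i).
Definition grow t (i : nat) : V := oapp (fun x : 'I_n => vP c2 x t) vZ (insub i).
Definition rowl t : seq V := map (grow t) (filter (Prow t) (iota 0 n)).
Definition zw (l : 'I_k) : seq V := vZl l :: vZ :: rowl (g l).
Definition W' : seq (seq V) := map vert (enum PR) ++ map zw (enum 'I_k).

Lemma Prow_val t (x : 'I_n) : Prow t x = (x \in S t).
Proof. by rewrite /Prow valK. Qed.

Lemma Prow_inv t i : Prow t i -> exists x : 'I_n, [/\ val x = i, x \in S t & grow t i = vP c2 x t].
Proof.
rewrite /Prow /grow; case: insubP => [x _ Ex|] //= Hx.
by exists x.
Qed.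

Lemma row_path t : path A vZ (rowl t).
Proof.
apply: path_fil.
- move=> x y Px Py lxy Hw.
  have [x' [Ex Hx Gx]] := Prow_inv Px; have [y' [Ey Hy Gy]] := Prow_inv Py.
  rewrite Gx Gy /= Hx /= /succ_in Hx Hy eqxx /= -Ex -Ey in lxy *.
  rewrite lxy /=; apply/forall_inP => w Hw'.
  apply/negP => Hb; have := Hw w; rewrite -Ex -Ey Hb => /(_ isT).
  by rewrite Prow_val Hw'.
- move=> y Py _ Hw; have [y' [Ey Hy Gy]] := Prow_inv Py.
  rewrite Gy /= /min_in Hy /=; apply/forall_inP => w Hw'.
  rewrite leqNgt; apply/negP => Hlt; have := Hw w; rewrite -Ey Hlt /= => /(_ isT).
  by rewrite Prow_val Hw'.
Qed.

Lemma row_mem t y : y \in rowl t -> exists2 x : 'I_n, x \in S t & y = vP c2 x t.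
Proof.
case/mapP => i; rewrite mem_filter => /andP[Pi _] ->.
by have [x [_ Hx ->]] := Prow_inv Pi; exists x.
Qed.

Lemma row_in t (x : 'I_n) : x \in S t -> vP c2 x t \in rowl t.
Proof.
move=> Hx; apply/mapP; exists (val x); last by rewrite /grow valK.
by rewrite mem_filter Prow_val Hx mem_iota /= ltn_ord.
Qed.


Lemma vP_eq c i j c' i' j' : (vP c i j == vP c' i' j' :> V) = [&& c == c', i == i' & j == j'].
Proof.
apply/eqP/and3P => [[-> -> ->]|[/eqP-> /eqP-> /eqP->]] //; by rewrite !eqxx.
Qed.

Lemma some_eq (T : eqType) (x y : T) : (Some x == Some y) = (x == y).
Proof. by apply/eqP/eqP => [[]|->]. Qed.

Lemma cnt0 (T : eqType) (p : pred T) s : (forall x, x \in s -> ~~ p x) -> count p s = 0.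
Proof. move=> H; apply/eqP; rewrite -leqn0 leqNgt -has_count; exact/hasPn. Qed.

Lemma W'_walk : all (walk isV A) W'.
Proof.
apply/allP => w; rewrite mem_cat => /orP[] /mapP [p Hp ->].
- move: Hp; rewrite mem_enum /PR inE => Hp.
  by rewrite /walk /vert /= /c0 /c1 /c2 /c3 /= !eqxx Hp.
- rewrite /walk /zw /=; apply/andP; split.
    by apply/allP => y /row_mem [x Hx ->].
  exact: row_path.
Qed.

Lemma W'_count v : isV v -> count (fun w => ohead w == Some v) W' = B_SC v.
Proof.
move=> Hv; rewrite count_cat !count_map.
case: v Hv => [[i|[[c i] j]]|[[]|l]] Hv.
- by rewrite !cnt0 // => x _ /=; rewrite some_eq.
- rewrite [X in _ + X]cnt0 // addn0 /=.
  case: (boolP (c == c0)) => [/eqP->|Hc].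
  + rewrite (eq_count (a2 := pred1 (i, j))); last first.
      by case=> a b /=; rewrite some_eq vP_eq eqxx /= xpair_eqE.
    have Hij : i \in S j := Hv.
    by rewrite count_uniq_mem ?enum_uniq // mem_enum inE /= Hij.
  + rewrite cnt0 //; last first.
      by case=> a b _ /=; rewrite some_eq vP_eq eq_sym (negbTE Hc).
    by clear Hv; case: c Hc => [[|c'] Hc] //=; rewrite /c0 => /eqP; case; apply: ord_inj.
- by rewrite !cnt0 // => x _ /=; rewrite some_eq.
- rewrite cnt0 // add0n /= (eq_count (a2 := pred1 l)); last by move=> l' /=; rewrite some_eq.
  by rewrite count_uniq_mem -enumT ?enum_uniq // mem_enum.
Qed.


Lemma vert_in (i : 'I_n) j : i \in S j -> vert (i, j) \in W'.
Proof. by move=> H; rewrite mem_cat; apply/orP; left; apply: map_f; rewrite mem_enum inE. Qed.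

Lemma zw_in l : zw l \in W'.
Proof. by rewrite mem_cat; apply/orP; right; apply: map_f; rewrite mem_enum. Qed.

Lemma connH w h q y : w \in W' -> w = h :: q -> y \in w -> connect (uarcH W') h y.
Proof. move=> Hw E; rewrite E; apply: (conn_walk Hw); rewrite -E; exact: infix_refl. Qed.

Lemma usym : connect_sym (uarcH W').
Proof. by apply: sym_connect_sym => x y; rewrite /uarcH orbC. Qed.

Lemma reachU i : connect (uarcH W') (vU i) vZ.
Proof.
have [l Hl] := Hg i.
have H1 : connect (uarcH W') (vP c0 i (g l)) (vU i).
  by apply: (connH (vert_in Hl) erefl); rewrite !inE eqxx orbT.
have H2 : connect (uarcH W') (vP c0 i (g l)) (vP c2 i (g l)).
  by apply: (connH (vert_in Hl) erefl); rewrite !inE eqxx !orbT.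
have H3 : connect (uarcH W') (vZl l) vZ.
  by apply: (connH (zw_in l) erefl); rewrite !inE eqxx orbT.
have H4 : connect (uarcH W') (vZl l) (vP c2 i (g l)).
  by apply: (connH (zw_in l) erefl); rewrite !inE (row_in Hl) !orbT.
rewrite usym in H1; rewrite usym in H4.
exact: connect_trans H1 (connect_trans H2 (connect_trans H4 H3)).
Qed.

Lemma reach v : isV v -> inH W' v /\ connect (uarcH W') v vZ.
Proof.
case: v => [[i|[[c i] j]]|[[]|l]] Hv.
- split; last exact: reachU.
  have [l Hl] := Hg i; apply/hasP; exists (vert (i, g l)); first exact: vert_in.
  by rewrite !inE eqxx orbT.
- have Hij : i \in S j := Hv.
  have Hm : vP c i j \in vert (i, j).
    case: c {Hv} => [[|[|[|[|c']]]] Hc]; rewrite ?inE.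
    + by rewrite (_ : Ordinal Hc = c0) ?eqxx //; apply: ord_inj.
    + by rewrite (_ : Ordinal Hc = c1) ?eqxx ?orbT //; apply: ord_inj.
    + by rewrite (_ : Ordinal Hc = c2) ?eqxx ?orbT //; apply: ord_inj.
    + by rewrite (_ : Ordinal Hc = c3) ?eqxx ?orbT //; apply: ord_inj.
    + by [].
  split; first by apply/hasP; exists (vert (i, j)) => //; exact: vert_in.
  have H1 := connH (vert_in Hij) erefl Hm.
  have H2 : connect (uarcH W') (vP c0 i j) (vU i).
    by apply: (connH (vert_in Hij) erefl); rewrite !inE eqxx orbT.
  rewrite usym in H1; exact: connect_trans H1 (connect_trans H2 (reachU i)).
- split; last exact: connect0.
  apply/hasP; exists (zw (Ordinal Hk1)); first exact: zw_in.
  by rewrite !inE eqxx orbT.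
- split; first by apply/hasP; exists (zw l); [exact: zw_in| rewrite mem_head].
  by apply: (connH (zw_in l) erefl); rewrite !inE eqxx orbT.
Qed.

Lemma W'_sol : ST_solution isV A (@F_SC n m k) (@B_SC n m k) W'.
Proof.
split; [exact: W'_walk | exact: W'_count |].
move=> x y Hx Hy _ _; have [Ix Cx] := reach Hx; have [Iy Cy] := reach Hy.
split => //; apply: connect_trans Cx _; by rewrite usym.
Qed.

Lemma W'_prop w : w \in W' -> forall (i : 'I_n) (j : 'I_m),
  ohead w = Some (vP c0 i j) -> all (inC S i) w.
Proof.
rewrite mem_cat => /orP[] /mapP [p Hp ->] i j //=.
move: Hp; rewrite mem_enum inE; case: p => a b /= Hab [Ea Eb]; subst a b.
by rewrite !eqxx /= Hab.
Qed.

End Constr.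

Theorem lemma6 (n m k : nat) (S : 'I_m -> {set 'I_n})
    (Hcover : \bigcup_(t < m) S t = [set: 'I_n])
    (Hk1 : 1 <= k) (Hkm : k <= m) :
  (exists W, ST_solution (@isV_SC n m k S) (arc_SC S) (@F_SC n m k) (@B_SC n m k) W) ->
  exists W, ST_solution (@isV_SC n m k S) (arc_SC S) (@F_SC n m k) (@B_SC n m k) W /\
    (forall w, w \in W -> forall (i : 'I_n) (j : 'I_m),
       ohead w = Some (vP c0 i j) -> all (inC S i) w).
Proof.
case=> W HW.
have t0 : 'I_m := Ordinal (leq_trans Hk1 Hkm).
have Hg : forall x : 'I_n, exists l, x \in S (f W t0 l).
  by move=> x; have /existsP [l Hl] := cover_all HW t0 x; exists l.
exists (W' S (f W t0)); split; first exact: W'_sol.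
exact: W'_prop.
Qed.
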